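(* Let $\mathcal N=\mathbb N$ or $\mathcal N=\{1,\dots,n\}$ with $n\ge2$, and let $\mathbf c=(c_i)_{i\in\mathcal N}$ be real numbers with $\inf_{i\in\mathcal N}c_i>0$. Let $\mathcal P$ be the set of sequences $\mathbf p=(p_i)_{i\in\mathcal N}$ with $p_i\ge0$, $\sum_i p_i=1$, $\sum_i p_ic_i<\infty$, and for $\mathbf p\in\mathcal P$ let $$H(\mathbf p)=-\Big(\sum_{i\in\mathcal N}p_i\log p_i\Big)\Big(\sum_{i\in\mathcal N}p_ic_i\Big)^{-1}\in[0,+\infty]$$ (with $0\log0=0$). If $\mathbf p\in\mathcal P$ satisfies $p_k=0$ for some $k\in\mathcal N$, then there exists $\mathbf p'\in\mathcal P$ with $p'_i>0$ for all $i\in\mathcal N$ such that $H(\mathbf p')\ge H(\mathbf p)$, and the inequality is strict when $H(\mathbf p)<\infty$. *)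

(* Defs.v *)
From Stdlib Require Import Reals.
From Coquelicot Require Export Coquelicot.
Open Scope R_scope.

(* Index set: [None] encodes N = the natural numbers {0,1,2,...};
   [Some n] encodes the finite set {0,...,n-1} (n elements; the paper's
   {1,...,n} shifted by one). *)
Definition inN (N : option nat) (i : nat) : Prop :=
  match N with None => True | Some n => (i < n)%nat end.

Definition mask (N : option nat) (f : nat -> R) (i : nat) : R :=
  match N with None => f i | Some n => if Nat.ltb i n then f i else 0 end.

Definition xlogx (x : R) : R := if Req_EM_T x 0 then 0 else x * ln x.

Definition inP (N : option nat) (c p : nat -> R) : Prop :=
  (forall i, inN N i -> 0 <= p i) /\
  is_series (mask N p) 1 /\
  ex_series (mask N (fun i => p i * c i)).

(* entropy -sum p_i log p_i, as an extended real in [0, +oo]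
   (limit of the partial sums of a series of nonnegative terms) *)
Definition entropy (N : option nat) (p : nat -> R) : Rbar :=
  Lim_seq (fun m => sum_n (mask N (fun i => - xlogx (p i))) m).

Definition cost (N : option nat) (c p : nat -> R) : R :=
  Series (mask N (fun i => p i * c i)).

Definition Hrate (N : option nat) (c p : nat -> R) : Rbar :=
  Rbar_mult (entropy N p) (Finite (/ cost N c p)).

(* Main.v *)
Require Import Defs.
From Stdlib Require Import Reals Lra Lia.
From Coquelicot Require Import Coquelicot.
Open Scope R_scope.

Lemma mask_cases N f i : (inN N i /\ mask N f i = f i) \/ (~inN N i /\ mask N f i = 0).
Proof.
  destruct N as [n|]; simpl.
  - destruct (Nat.ltb_spec i n); [left|right]; split; auto; lia.
  - left; auto.
Qed.

Lemma mask_ext N f g i : (inN N i -> f i = g i) -> mask N f i = mask N g i.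
Proof.
  intros H. destruct (mask_cases N f i) as [[Hi E]|[Hi E]];
  destruct (mask_cases N g i) as [[Hi' E']|[Hi' E']]; try tauto; rewrite E, E'; auto.
Qed.

Lemma mask_lin N a b f g i :
  mask N (fun j => a * f j + b * g j) i = a * mask N f i + b * mask N g i.
Proof.
  destruct N as [n|]; simpl; auto. destruct (Nat.ltb i n); ring.
Qed.

Lemma mask_scal_r N f a i : mask N (fun j => f j * a) i = mask N f i * a.
Proof.
  destruct N as [n|]; simpl; auto. destruct (Nat.ltb i n); ring.
Qed.

Lemma sum_nonneg (a : nat -> R) m : (forall n, 0 <= a n) -> 0 <= sum_n a m.
Proof.
  intros H; induction m. rewrite sum_O; auto.
  rewrite sum_Sn. unfold plus; simpl. specialize (H (S m)); lra.
Qed.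

Lemma sum_ge_term (a : nat -> R) k m : (forall n, 0 <= a n) -> (k <= m)%nat -> a k <= sum_n a m.
Proof.
  intros H Hkm; induction m.
  - replace k with 0%nat by lia. rewrite sum_O; lra.
  - rewrite sum_Sn. unfold plus; simpl.
    destruct (Nat.eq_dec k (S m)) as [->|Hne].
    + pose proof (sum_nonneg a m H); lra.
    + specialize (IHm ltac:(lia)). specialize (H (S m)); lra.
Qed.

Lemma sum_incr (a : nat -> R) : (forall n, 0 <= a n) -> forall n, sum_n a n <= sum_n a (S n).
Proof. intros H n. rewrite sum_Sn. unfold plus; simpl. specialize (H (S n)); lra. Qed.

Lemma term_le_series a l : (forall n, 0 <= a n) -> is_series a l -> forall n, a n <= l.
Proof.
  intros H Hs n.
  assert (Hl : is_lim_seq (sum_n a) l) by exact Hs.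
  pose proof (is_lim_seq_incr_compare _ _ Hl (sum_incr a H) n).
  pose proof (sum_ge_term a n n H (le_n n)). lra.
Qed.

Lemma ex_series_bound (a b : nat -> R) : (forall n, 0 <= a n <= b n) -> ex_series b -> ex_series a.
Proof.
  intros H Hb. apply (ex_series_le a b); auto.
  intros n. unfold norm; simpl. unfold abs; simpl. specialize (H n).
  rewrite Rabs_pos_eq; lra.
Qed.

Lemma xlogx_key a m : 0 <= a -> 0 < m -> a * ln m + a - m <= xlogx a.
Proof.
  intros Ha Hm. unfold xlogx. destruct (Req_EM_T a 0) as [->|Hne]. lra.
  assert (Ha' : 0 < a) by lra.
  pose proof (exp_ineq1_le (ln (m / a))). rewrite exp_ln in H by (apply Rdiv_lt_0_compat; lra).
  rewrite ln_div in H by lra.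
  assert (a * (1 + (ln m - ln a)) <= a * (m / a)) by (apply Rmult_le_compat_l; lra).
  replace (a * (m / a)) with m in H0 by (field; lra). nra.
Qed.

Lemma xlogx_concave t a b : 0 <= t <= 1 -> 0 <= a -> 0 <= b -> 0 < (1-t)*a + t*b ->
  xlogx ((1-t)*a + t*b) <= (1-t) * xlogx a + t * xlogx b.
Proof.
  intros Ht Ha Hb Hm. set (m := (1-t)*a+t*b) in *.
  pose proof (xlogx_key a m Ha Hm). pose proof (xlogx_key b m Hb Hm).
  assert (E : xlogx m = m * ln m) by (unfold xlogx; destruct (Req_EM_T m 0); lra).
  assert ((1-t) * (a * ln m + a - m) <= (1-t) * xlogx a) by (apply Rmult_le_compat_l; lra).
  assert (t * (b * ln m + b - m) <= t * xlogx b) by (apply Rmult_le_compat_l; lra).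
  assert (Eq : (1-t) * (a * ln m + a - m) + t * (b * ln m + b - m) = m * ln m) by (unfold m; ring).
  lra.
Qed.

Lemma xlogx_nonpos x : 0 <= x <= 1 -> xlogx x <= 0.
Proof.
  intros H. unfold xlogx. destruct (Req_EM_T x 0). lra.
  assert (ln x <= 0). { rewrite <- ln_1. apply ln_le; lra. }
  nra.
Qed.
Lemma mask_nonneg N f : (forall i, inN N i -> 0 <= f i) -> forall i, 0 <= mask N f i.
Proof. intros H i. destruct (mask_cases N f i) as [[Hi E]|[Hi E]]; rewrite E; auto; lra. Qed.

Lemma inP_le1 N c p : inP N c p -> forall i, inN N i -> p i <= 1.
Proof.
  intros [H0 [H1 H2]] i Hi.
  pose proof (term_le_series _ _ (mask_nonneg N p H0) H1 i).
  destruct (mask_cases N p i) as [[_ E]|[Hi' _]]; [rewrite E in H; auto| tauto].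
Qed.

Lemma cost_ge N c p delta : 0 < delta -> (forall i, inN N i -> delta <= c i) -> inP N c p ->
  delta <= cost N c p.
Proof.
  intros Hd Hc [H0 [H1 H2]]. unfold cost.
  assert (Series (fun n => delta * mask N p n) <= Series (mask N (fun i => p i * c i))).
  { apply Series_le; auto. intros n.
    destruct (mask_cases N p n) as [[Hi E]|[Hi E]]; rewrite E;
    destruct (mask_cases N (fun i => p i * c i) n) as [[Hi' E']|[Hi' E']]; rewrite E'; try tauto.
    - specialize (H0 n Hi). specialize (Hc n Hi). split; nra.
    - lra. }
  rewrite Series_scal_l, (is_series_unique _ _ H1) in H. lra.
Qed.

Lemma inP_mix N c p q t : 0 <= t <= 1 -> inP N c p -> inP N c q ->
  inP N c (fun i => (1-t) * p i + t * q i) /\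
  cost N c (fun i => (1-t) * p i + t * q i) = (1-t) * cost N c p + t * cost N c q.
Proof.
  intros Ht [P0 [P1 P2]] [Q0 [Q1 Q2]].
  assert (Hs : is_series (fun n => (1-t)*mask N p n + t*mask N q n) ((1-t)*1 + t*1))
    by exact (is_series_plus _ _ _ _ (is_series_scal_l (1-t) _ _ P1) (is_series_scal_l t _ _ Q1)).
  pose proof (Series_correct _ P2) as P3. pose proof (Series_correct _ Q2) as Q3.
  assert (Hc : is_series (fun n => (1-t)*mask N (fun i => p i * c i) n + t*mask N (fun i => q i * c i) n)
     ((1-t)*Series (mask N (fun i => p i * c i)) + t*Series (mask N (fun i => q i * c i))))
    by exact (is_series_plus _ _ _ _ (is_series_scal_l (1-t) _ _ P3) (is_series_scal_l t _ _ Q3)).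
  assert (Ec : forall n, (1-t)*mask N (fun i => p i * c i) n + t*mask N (fun i => q i * c i) n
      = mask N (fun i => ((1-t) * p i + t * q i) * c i) n).
  { intros n. rewrite <- mask_lin. apply mask_ext. intros; ring. }
  apply (is_series_ext _ _ _ Ec) in Hc.
  split; [split; [|split]|].
  - intros i Hi. specialize (P0 i Hi). specialize (Q0 i Hi). nra.
  - apply (is_series_ext _ _ _ (fun n => eq_sym (mask_lin N (1-t) t p q n))) in Hs.
    assert (E1 : (1-t)*1+t*1 = 1) by ring. rewrite E1 in Hs. exact Hs.
  - eexists; exact Hc.
  - unfold cost. apply is_series_unique. exact Hc.
Qed.
Lemma ex_geom k : ex_series (fun n => (/2)^n * k).
Proof.
  apply ex_series_scal_r. eexists. apply is_series_geom. rewrite Rabs_pos_eq; lra.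
Qed.

Lemma exists_q N c delta : inN N 0 -> 0 < delta -> (forall i, inN N i -> delta <= c i) ->
  exists q, inP N c q /\ forall i, inN N i -> 0 < q i.
Proof.
  intros H0 Hd Hc.
  set (g := fun i => (/2)^i / c i).
  assert (Hg : forall i, inN N i -> 0 < g i).
  { intros i Hi. unfold g. specialize (Hc i Hi). apply Rdiv_lt_0_compat; [apply pow_lt|]; lra. }
  assert (HG : forall n, 0 <= mask N g n <= (/2)^n * /delta).
  { intros n. destruct (mask_cases N g n) as [[Hi E]|[Hi E]]; rewrite E.
    - specialize (Hg n Hi). split; [lra|]. unfold g, Rdiv. apply Rmult_le_compat_l.
      apply pow_le; lra. apply Rinv_le_contravar; auto.
    - split; [lra|]. apply Rmult_le_pos; [apply pow_le; lra| left; apply Rinv_0_lt_compat; lra]. }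
  assert (Gex : ex_series (mask N g)) by (apply (ex_series_bound _ _ HG (ex_geom _))).
  set (Z := Series (mask N g)).
  assert (GZ : is_series (mask N g) Z) by (apply Series_correct; auto).
  assert (Zpos : 0 < Z).
  { pose proof (term_le_series _ _ (fun n => proj1 (HG n)) GZ 0).
    destruct (mask_cases N g 0) as [[Hi E]|[Hi E]]; [|tauto].
    rewrite E in H. specialize (Hg 0%nat Hi). lra. }
  exists (fun i => g i / Z). split; [split; [|split]|].
  - intros i Hi. specialize (Hg i Hi). left; apply Rdiv_lt_0_compat; lra.
  - pose proof (is_series_scal_r (/Z) _ _ GZ) as H.
    rewrite Rinv_r in H by lra.
    apply (is_series_ext _ _ _ (fun n => eq_sym (mask_scal_r N g (/Z) n))) in H. exact H.
  - apply (ex_series_bound _ (fun n => (/2)^n * /Z)); [| apply ex_geom].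
    intros n. destruct (mask_cases N (fun i => g i / Z * c i) n) as [[Hi E]|[Hi E]]; rewrite E.
    + specialize (Hc n Hi). unfold g.
      replace ((/2)^n / c n / Z * c n) with ((/2)^n * /Z) by (field; lra).
      split; [|lra]. apply Rmult_le_pos; [apply pow_le; lra| left; apply Rinv_0_lt_compat; lra].
    + split; [lra|]. apply Rmult_le_pos; [apply pow_le; lra| left; apply Rinv_0_lt_compat; lra].
  - intros i Hi. specialize (Hg i Hi). apply Rdiv_lt_0_compat; lra.
Qed.
Lemma mult_pinf_r y : 0 < y -> Rbar_mult p_infty (Finite y) = p_infty.
Proof. intros. apply is_Rbar_mult_unique, is_Rbar_mult_p_infty_pos. simpl; auto. Qed.
Lemma mult_pinf_l y : 0 < y -> Rbar_mult (Finite y) p_infty = p_infty.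
Proof. intros. rewrite Rbar_mult_comm. apply mult_pinf_r; auto. Qed.

Lemma h_nonneg N c p : inP N c p -> forall i, 0 <= mask N (fun j => - xlogx (p j)) i.
Proof.
  intros HP. apply mask_nonneg. intros i Hi.
  pose proof (inP_le1 N c p HP i Hi). destruct HP as [H0 _]. specialize (H0 i Hi).
  pose proof (xlogx_nonpos (p i) ltac:(lra)). lra.
Qed.

Lemma entropy_cases N c p : inP N c p -> entropy N p = p_infty \/
  exists E, 0 <= E /\ is_lim_seq (fun m => sum_n (mask N (fun i => - xlogx (p i))) m) E
   /\ entropy N p = Finite E.
Proof.
  intros HP. pose proof (h_nonneg N c p HP) as Hn.
  pose proof (sum_incr _ Hn) as Hinc.
  pose proof (Lim_seq_correct _ (ex_lim_seq_incr _ Hinc)) as HL.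
  unfold entropy. destruct (Lim_seq (fun m => sum_n (mask N (fun i => - xlogx (p i))) m)) as [E| |] eqn:Eq.
  - right. exists E. split; [|split; auto].
    pose proof (is_lim_seq_incr_compare _ _ HL Hinc 0). pose proof (sum_nonneg _ 0 Hn). lra.
  - left; auto.
  - exfalso. assert (Rbar_le (Lim_seq (fun _ => 0)) (Lim_seq (fun m => sum_n (mask N (fun i => - xlogx (p i))) m))).
    { apply Lim_seq_le_loc. exists 0%nat. intros n _. apply sum_nonneg; auto. }
    rewrite Eq, Lim_seq_const in H. simpl in H. auto.
Qed.

Lemma xlogx0 : xlogx 0 = 0.
Proof. unfold xlogx. destruct (Req_EM_T 0 0); auto; lra. Qed.

Lemma termwise N c p q t : inP N c p -> inP N c q -> (forall i, inN N i -> 0 < q i) -> 0 < t < 1 ->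
  forall i, (1-t) * mask N (fun j => - xlogx (p j)) i <= mask N (fun j => - xlogx ((1-t) * p j + t * q j)) i.
Proof.
  intros HP HQ Hq Ht i.
  destruct (mask_cases N (fun j => - xlogx (p j)) i) as [[Hi E]|[Hi E]]; rewrite E;
  destruct (mask_cases N (fun j => - xlogx ((1-t) * p j + t * q j)) i) as [[Hi' E']|[Hi' E']]; rewrite E'; try tauto; [|lra].
  pose proof (inP_le1 N c q HQ i Hi). specialize (Hq i Hi).
  destruct HP as [P0 _]. specialize (P0 i Hi).
  pose proof (xlogx_nonpos (q i) ltac:(lra)).
  assert (0 < (1-t) * p i + t * q i) by nra.
  pose proof (xlogx_concave t (p i) (q i) ltac:(lra) P0 ltac:(lra) H1). nra.
Qed.

Lemma term_k N p q t k : inN N k -> p k = 0 -> 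
  (1-t) * mask N (fun j => - xlogx (p j)) k + t * q k * (- ln (t * q k)) <= mask N (fun j => - xlogx ((1-t) * p j + t * q j)) k.
Proof.
  intros Hk Hp.
  destruct (mask_cases N (fun j => - xlogx (p j)) k) as [[Hi E]|[Hi E]]; rewrite E; [|tauto].
  destruct (mask_cases N (fun j => - xlogx ((1-t) * p j + t * q j)) k) as [[Hi' E']|[Hi' E']]; rewrite E'; [|tauto].
  rewrite Hp, xlogx0. replace ((1-t)*0 + t*q k) with (t * q k) by ring.
  unfold xlogx. destruct (Req_EM_T (t * q k) 0) as [e|e]; [rewrite e; rewrite Rmult_0_l; lra | lra].
Qed.

Lemma sum_shift (a b : nat -> R) c : (forall i, c * a i <= b i) -> forall m, c * sum_n a m <= sum_n b m.
Proof.
  intros H m. induction m. rewrite !sum_O; auto.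
  rewrite !sum_Sn. unfold plus; simpl. specialize (H (S m)). lra.
Qed.

Lemma sum_shift_k (a b : nat -> R) c k A : (forall i, c * a i <= b i) -> c * a k + A <= b k ->
  forall m, (k <= m)%nat -> c * sum_n a m + A <= sum_n b m.
Proof.
  intros H Hk m Hm. induction m.
  - replace k with 0%nat in * by lia. rewrite !sum_O; auto.
  - rewrite !sum_Sn. unfold plus; simpl.
    destruct (Nat.eq_dec k (S m)) as [->|Hne].
    + pose proof (sum_shift a b c H m). lra.
    + specialize (IHm ltac:(lia)). specialize (H (S m)). lra.
Qed.
Theorem lemma2p1 (N : option nat) (c p : nat -> R) :
  (match N with None => True | Some n => (2 <= n)%nat end) ->
  (exists delta : R, 0 < delta /\ forall i, inN N i -> delta <= c i) ->
  inP N c p ->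
  (exists k, inN N k /\ p k = 0) ->
  exists p' : nat -> R,
    inP N c p' /\
    (forall i, inN N i -> 0 < p' i) /\
    Rbar_le (Hrate N c p) (Hrate N c p') /\
    (Rbar_lt (Hrate N c p) p_infty -> Rbar_lt (Hrate N c p) (Hrate N c p')).
Proof.
  intros HN [delta [Hd Hc]] HP [k [Hk Hpk]].
  assert (H0 : inN N 0) by (destruct N; simpl; auto; lia).
  destruct (exists_q N c delta H0 Hd Hc) as [q [HQ Hqpos]].
  pose proof (cost_ge N c p delta Hd Hc HP) as HC.
  pose proof (cost_ge N c q delta Hd Hc HQ) as HCq.
  pose proof (Hqpos k Hk) as Hqk. pose proof (inP_le1 N c q HQ k Hk) as Hqk1.
  assert (Gen : forall t, 0 < t < 1 ->
    inP N c (fun i => (1-t) * p i + t * q i) /\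
    (forall i, inN N i -> 0 < (1-t) * p i + t * q i) /\
    cost N c (fun i => (1-t) * p i + t * q i) = (1-t) * cost N c p + t * cost N c q /\
    (forall m, (1-t) * sum_n (mask N (fun j => - xlogx (p j))) m
        <= sum_n (mask N (fun j => - xlogx ((1-t) * p j + t * q j))) m) /\
    (forall m, (k <= m)%nat -> (1-t) * sum_n (mask N (fun j => - xlogx (p j))) m + t * q k * (- ln (t * q k))
        <= sum_n (mask N (fun j => - xlogx ((1-t) * p j + t * q j))) m)).
  { intros t Ht. destruct (inP_mix N c p q t ltac:(lra) HP HQ) as [HM HMc].
    split; [auto|split; [|split; [auto|split]]].
    - intros i Hi. destruct HP as [P0 _]. specialize (P0 i Hi). specialize (Hqpos i Hi). nra.
    - apply sum_shift. apply (termwise N c p q t HP HQ Hqpos Ht).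
    - apply sum_shift_k. apply (termwise N c p q t HP HQ Hqpos Ht). apply term_k; auto. }
  destruct (entropy_cases N c p HP) as [Einf | [E [E0 [EL Eeq]]]].
  -
    destruct (Gen (1/2) ltac:(lra)) as [HM [Hpos [Hcost [Hs _]]]].
    exists (fun i => (1 - 1/2) * p i + 1/2 * q i). split; [auto|split; [auto|]].
    pose proof (cost_ge _ _ _ _ Hd Hc HM) as HC'.
    assert (Ee : entropy N (fun i => (1 - 1/2) * p i + 1/2 * q i) = p_infty).
    { assert (L : Rbar_le (Lim_seq (fun m => (1-1/2) * sum_n (mask N (fun j => - xlogx (p j))) m))
         (entropy N (fun i => (1 - 1/2) * p i + 1/2 * q i))).
      { apply Lim_seq_le_loc. exists 0%nat. intros n _. apply Hs. }
      rewrite Lim_seq_scal_l in L.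
      assert (Einf' : Lim_seq (sum_n (mask N (fun j => - xlogx (p j)))) = p_infty) by exact Einf.
      rewrite Einf' in L.
      rewrite mult_pinf_l in L by lra.
      destruct (entropy N (fun i => (1 - 1/2) * p i + 1/2 * q i)); simpl in L; tauto. }
    unfold Hrate. rewrite Einf, Ee, !mult_pinf_r.
    2: apply Rinv_0_lt_compat; lra. 2: apply Rinv_0_lt_compat; lra.
    split; simpl; auto.
  -
    set (C := cost N c p) in *. set (Cq := cost N c q) in *.
    set (K := E * Cq / (q k * C) + 1).
    assert (K1 : 1 <= K).
    { unfold K. assert (0 <= E * Cq / (q k * C)).
      { apply Rmult_le_pos. nra. left; apply Rinv_0_lt_compat; nra. } lra. }
    set (t := exp (- K) / 2).
    assert (eK : exp (-K) < 1). { rewrite <- exp_0. apply exp_increasing. lra. }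
    assert (eK0 : 0 < exp (-K)) by apply exp_pos.
    assert (Ht : 0 < t < 1) by (unfold t; lra).
    assert (Hln : ln (t * q k) < - K).
    { rewrite <- (ln_exp (-K)). apply ln_increasing. nra. unfold t. nra. }
    set (A := t * q k * (- ln (t * q k))).
    assert (HA : A > t * q k * K). { unfold A. assert (0 < t * q k) by nra. nra. }
    destruct (Gen t Ht) as [HM [Hpos [Hcost [_ Hs]]]].
    exists (fun i => (1 - t) * p i + t * q i). split; [auto|split; [auto|]].
    pose proof (cost_ge _ _ _ _ Hd Hc HM) as HC'.
    set (C' := cost N c (fun i => (1 - t) * p i + t * q i)) in *.
    assert (L : Rbar_le (Finite ((1-t) * E + A)) (entropy N (fun i => (1 - t) * p i + t * q i))).
    { assert (Lm : Lim_seq (fun m => (1-t) * sum_n (mask N (fun j => - xlogx (p j))) m + A) = (1-t)*E + A).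
      { apply is_lim_seq_unique. apply is_lim_seq_plus'. exact (is_lim_seq_scal_l _ (1-t) E EL).
        apply is_lim_seq_const. }
      rewrite <- Lm. apply Lim_seq_le_loc. exists k. intros n Hn. apply Hs; auto. }
    assert (Hlt : Rbar_lt (Hrate N c p) (Hrate N c (fun i => (1 - t) * p i + t * q i))).
    { unfold Hrate. rewrite Eeq. fold C C'.
      destruct (entropy N (fun i => (1 - t) * p i + t * q i)) as [E'| |]; simpl in L |- *.
      - assert (Key : E * C' < E' * C).
        { rewrite Hcost. fold C Cq.
          assert (t * q k * K * C = t * (E * Cq + q k * C)).
          { unfold K. field. nra. }
          assert (((1-t)*E + A) * C <= E' * C) by (apply Rmult_le_compat_r; lra).
          assert (0 < t * q k * C) by (apply Rmult_lt_0_compat; nra).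
          assert (A * C > t * q k * K * C) by nra.
          nra. }
        assert (E * / C = E * C' / (C * C')) by (field; lra).
        assert (E' * / C' = E' * C / (C * C')) by (field; lra).
        rewrite H, H1. unfold Rdiv. apply Rmult_lt_compat_r; auto.
        apply Rinv_0_lt_compat; nra.
      - assert (0 < / C') by (apply Rinv_0_lt_compat; lra).
        destruct (Rle_dec 0 (/ C')) as [h|h]; [destruct (Rle_lt_or_eq_dec 0 (/ C') h) as [h'|h']|]; simpl; auto; lra.
      - contradiction. }
    split; [apply Rbar_lt_le; auto | auto].
Qed.
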